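(* In the setting described in the context, let $i\in V$, $j\in N_C(i)$, $W=W_{ij}$ and $Q=W-H\bar H W$. Then for every $\tilde x\in\mathbb{R}^m$, with $Z=H\bar H\tilde x$, we have $QZ=\mathbf{0}_m$.
   Context: Let $V=\{1,\ldots,N\}$, $N\ge 2$, and let $G_I=(V,E_I)$ be a connected undirected graph which is not complete, with adjacency matrix $A$; let $B=A+I_N$. For $i\in V$ let $N_I(i)$ be the set of neighbors of $i$ in $G_I$, $\tilde N_I(i)=N_I(i)\cup\{i\}$, $m_i=\deg_{G_I}(i)+1$, $m=\sum_{i=1}^N m_i$, $\mathbf m=(m_1,\ldots,m_N)^T$. For $i,j\in V$ set $s_{ij}=\sum_{l=1}^{j}B(i,l)+\sum_{r=1}^{i-1}m_r$ (the last sum is $0$ for $i=1$). Let $e_1,\ldots,e_m$ be the standard basis of $\mathbb{R}^m$ and define $E_j^i=e_{s_{ij}}$ if $j\in\tilde N_I(i)$ and $E_j^i=\mathbf{0}_m$ otherwise. Let $H=\big[\sum_{i=1}^N E_1^i,\ldots,\sum_{i=1}^N E_N^i\big]\in\mathbb{R}^{m\times N}$ and $\bar H=\mathrm{diag}(1/m_1,\ldots,1/m_N)H^T\in\mathbb{R}^{N\times m}$. Let $G_C=(V,E_C)$ be a communication graph with $G_m\subseteq G_C\subseteq G_I$, where $G_m$ is a maximal triangle-free spanning subgraph of $G_I$ (a triangle-free spanning subgraph such that adding any edge of $G_I$ not in it creates a triangle); $N_C(i)$ denotes the neighbors of $i$ in $G_C$. For $i,j\in V$ let $\mathrm{ind}(i,j)=\tilde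 N_I(i)\cap\tilde N_I(j)$ and $W_{ij}=I_m-\tfrac12\sum_{l\in \mathrm{ind}(i,j)}(E_l^{i}-E_l^{j})(E_l^{i}-E_l^{j})^T$. *)

(* Defs.v *)
(* Vertices V = {1..N} are modelled as 'I_N (0-based). *)
From HB Require Import structures.
From mathcomp Require Import all_boot all_order all_algebra.
Set Implicit Arguments. Unset Strict Implicit. Unset Printing Implicit Defensive.
Import Order.TTheory GRing.Theory Num.Theory.
Local Open Scope ring_scope.

Section Defs.
Variable N : nat.

Definition simple_graph (e : rel 'I_N) : Prop :=
  (forall x y, e x y = e y x) /\ (forall x, ~~ e x x).

Definition graph_connected (e : rel 'I_N) : Prop := forall x y, connect e x y.

Definition graph_not_complete (e : rel 'I_N) : Prop :=
  exists x y, (x != y) && ~~ e x y.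

Definition subgraph (e1 e2 : rel 'I_N) : Prop := forall x y, e1 x y -> e2 x y.

Definition triangle_free (e : rel 'I_N) : Prop :=
  forall x y z, ~ [&& e x y, e y z & e x z].

Definition add_edge (e : rel 'I_N) (u v : 'I_N) : rel 'I_N :=
  fun x y => [|| e x y, (x == u) && (y == v) | (x == v) && (y == u)].

Definition maximal_triangle_free_subgraph (em eI : rel 'I_N) : Prop :=
  [/\ simple_graph em, subgraph em eI, triangle_free em &
      forall u v, eI u v -> ~~ em u v -> ~ triangle_free (add_edge em u v)].

Variable eI : rel 'I_N.

Definition cnbhd (i : 'I_N) : pred 'I_N := fun j => (j == i) || eI i j.

Definition mdeg (i : 'I_N) : nat := #|[pred j | eI i j]|.+1.

Definition msum : nat := \sum_(i < N) mdeg i.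

Definition Bmx (i l : 'I_N) : nat := cnbhd i l.

(* s_{ij}, 1-based as in the paper *)
Definition spos (i j : 'I_N) : nat :=
  (\sum_(l < N | (l <= j)%N) Bmx i l + \sum_(r < N | (r < i)%N) mdeg r)%N.

Variable R : realFieldType.

(* E_j^i : the standard basis vector e_{s_ij} (0-based index s_ij - 1) or 0 *)
Definition Evec (j i : 'I_N) : 'cV[R]_msum :=
  \col_(k < msum) (if cnbhd i j && (k == (spos i j).-1 :> nat) then 1 else 0).

Definition Hmx : 'M[R]_(msum, N) := \matrix_(k < msum, j < N) (\sum_(i < N) Evec j i) k 0.

Definition Hbar : 'M[R]_(N, msum) :=
  diag_mx (\row_(i < N) ((mdeg i)%:R)^-1) *m Hmx^T.

Definition Wmx (i j : 'I_N) : 'M[R]_msum :=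
  1%:M - 2^-1 *: \sum_(l < N | cnbhd i l && cnbhd j l)
                    ((Evec l i - Evec l j) *m (Evec l i - Evec l j)^T).

End Defs.

(* Main.v *)
Require Import Defs.
From HB Require Import structures.
From mathcomp Require Import all_boot all_order all_algebra.
From mathcomp Require Import zify.
Import Order.TTheory GRing.Theory Num.Theory.

Set Implicit Arguments. Unset Strict Implicit.
Section Nat.
Variables (N : nat) (eI : rel 'I_N).
Hypothesis hI : simple_graph eI.

Definition S1 (a b : 'I_N) := (\sum_(l < N | (l <= b)%N) Bmx eI a l)%N.
Definition T (a : 'I_N) := (\sum_(r < N | (r < a)%N) mdeg eI r)%N.

Lemma sposE a b : spos eI a b = (S1 a b + T a)%N.
Proof. by []. Qed.

Lemma sum_cn a : (\sum_(l < N) Bmx eI a l)%N = mdeg eI a.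
Proof.
have -> : (\sum_(l < N) Bmx eI a l = \sum_(l < N | cnbhd eI a l) 1)%N.
  by rewrite [RHS]big_mkcond; apply eq_bigr => l _; rewrite /Bmx; case: (cnbhd eI a l).
rewrite sum1_card (cardD1 a) /mdeg.
have -> : a \in cnbhd eI a by rewrite unfold_in /cnbhd eqxx.
rewrite add1n; congr _.+1; apply: eq_card => l.
rewrite !inE /cnbhd unfold_in /=.
case: eqP => [->|_] /=; last by [].
by have := (proj2 hI a) => /negbTE ->.
Qed.

Lemma S1_le a b : (S1 a b <= mdeg eI a)%N.
Proof.
rewrite -sum_cn /S1 [X in (_ <= X)%N](bigID (fun l : 'I_N => (l <= b)%N)) /=.
exact: leq_addr.
Qed.

Lemma S1_pos a b : cnbhd eI a b -> (0 < S1 a b)%N.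
Proof.
move=> h; rewrite /S1 (bigD1 b) //= /Bmx h //.
Qed.

Lemma S1_mono a (b b' : 'I_N) : (b < b')%N -> cnbhd eI a b' -> (S1 a b < S1 a b')%N.
Proof.
move=> lt h; rewrite /S1 [X in (_ < X)%N](bigID (fun l : 'I_N => (l <= b)%N)) /=.
have -> : (\sum_(i < N | (i <= b') && (i <= b)) Bmx eI a i =
          \sum_(i < N | (i <= b)) Bmx eI a i)%N.
  apply: eq_bigl => l; case e: (l <= b)%N; rewrite ?andbT ?andbF //.
  exact: (leq_trans e (ltnW lt)).
rewrite -addn1 leq_add2l (bigD1 b') /=; last by rewrite leqnn -ltnNge.
by rewrite /Bmx h.
Qed.

Lemma T_mono (a c : 'I_N) : (a < c)%N -> (T a + mdeg eI a <= T c)%N.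
Proof.
move=> lt; rewrite /T [X in (_ <= X)%N](bigID (fun l : 'I_N => (l < a)%N)) /=.
have -> : (\sum_(i < N | (i < c) && (i < a)) mdeg eI i =
          \sum_(i < N | (i < a)) mdeg eI i)%N.
  apply: eq_bigl => l; case e: (l < a)%N; rewrite ?andbT ?andbF //.
  exact: (ltn_trans e lt).
rewrite leq_add2l (bigD1 a) /=; last by rewrite lt ltnn.
exact: leq_addr.
Qed.

Lemma T_le a : (T a + mdeg eI a <= msum eI)%N.
Proof.
rewrite /T /msum [X in (_ <= X)%N](bigID (fun l : 'I_N => (l < a)%N)) /=.
rewrite leq_add2l (bigD1 a) /=; last by rewrite ltnn.
exact: leq_addr.
Qed.

Lemma spos_bound a b : cnbhd eI a b -> ((spos eI a b).-1 < msum eI)%N.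
Proof.
move=> h; rewrite sposE.
have := S1_pos h; have := S1_le a b; have := T_le a. lia.
Qed.

Lemma spos_pos a b : cnbhd eI a b -> (0 < spos eI a b)%N.
Proof. move=> h; rewrite sposE; have := S1_pos h; lia. Qed.

Lemma spos_inj a b c d : cnbhd eI a b -> cnbhd eI c d ->
  (spos eI a b).-1 = (spos eI c d).-1 -> a = c /\ b = d.
Proof.
move=> h1 h2 e.
have e' : spos eI a b = spos eI c d.
  by have := spos_pos h1; have := spos_pos h2; lia.
move: e'; rewrite !sposE => e'.
have [lt|lt|eq] := ltngtP a c.
- exfalso; have := T_mono lt; have := S1_le a b; have := S1_pos h2; lia.
- exfalso; have := T_mono lt; have := S1_le c d; have := S1_pos h1; lia.
- have ac : a = c by apply: val_inj.
  subst c; split => //.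
  have [lt'|lt'|eq'] := ltngtP b d.
  + exfalso; have := S1_mono lt' h2; lia.
  + exfalso; have := S1_mono lt' h1; lia.
  + by apply: val_inj.
Qed.
End Nat.

Section Mx.
Variables (N : nat) (eI : rel 'I_N) (R : realFieldType).
Hypothesis hI : simple_graph eI.
Local Open Scope ring_scope.

Definition P (k : 'I_(msum eI)) (a b : 'I_N) : bool :=
  cnbhd eI a b && (k == (spos eI a b).-1 :> nat).

Lemma EvecE l a k : Evec eI R l a k 0 = (P k a l)%:R.
Proof. by rewrite mxE /P; case: (_ && _). Qed.

Lemma HmxE k b : Hmx eI R k b = \sum_c (P k c b)%:R.
Proof. by rewrite mxE summxE; apply eq_bigr => c _; exact: EvecE. Qed.

Lemma Gsum a l c b : \sum_k ((P k a l)%:R * (P k c b)%:R : R) =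
  if (a == c) && (l == b) then (cnbhd eI a l)%:R else 0.
Proof.
case: ifP => [/andP[/eqP<- /eqP<-]|ne].
- case h: (cnbhd eI a l).
  + rewrite (bigD1 (Ordinal (spos_bound hI h))) /=; last by [].
    rewrite /P h eqxx /= mulr1 big1 ?addr0 // => k hk.
    case: eqP => e; last by rewrite mulr0.
    by exfalso; move/eqP: hk; apply; apply: val_inj.
  + by rewrite big1 // => k _; rewrite /P h mul0r.
- rewrite big1 // => k _.
  case p1: (P k a l); case p2: (P k c b); rewrite ?mulr0 ?mul0r //.
  exfalso; move: p1 p2; rewrite /P => /andP[h1 /eqP e1] /andP[h2 /eqP e2].
  have [ac lb] := spos_inj hI h1 h2 (etrans (esym e1) e2).
  by rewrite ac lb !eqxx in ne.
Qed.

Lemma HtH a b : ((Hmx eI R)^T *m Hmx eI R) a b = if a == b then (mdeg eI a)%:R else 0.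
Proof.
rewrite mxE.
under eq_bigr => k _ do rewrite mxE !HmxE mulr_suml.
under eq_bigr => k _ do under eq_bigr => i' _ do rewrite mulr_sumr.
rewrite exchange_big /=.
under eq_bigr => i' _ do rewrite exchange_big /=.
under eq_bigr => i' _ do under eq_bigr => c _ do rewrite Gsum.
case: (eqVneq a b) => [_|ne].
- have E : forall i', \sum_c (if (i' == c) && true then (cnbhd eI i' a)%:R else 0 : R)
     = (cnbhd eI i' a)%:R.
    move=> i'; rewrite (bigD1 i') //= eqxx big1 ?addr0 // => c hc.
    by rewrite andbT eq_sym (negbTE hc).
  under eq_bigr => i' _ do rewrite E.
  rewrite -natr_sum -sum_cn //; congr (_%:R); apply eq_bigr => c _.
  by rewrite /Bmx /cnbhd eq_sym (proj1 hI).
- by rewrite big1 // => i' _; rewrite big1 // => c _; rewrite andbF.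
Qed.

Lemma EtH a l : cnbhd eI a l -> (Evec eI R l a)^T *m Hmx eI R = \row_b ((l == b)%:R).
Proof.
move=> h; apply/matrixP => i b; rewrite ord1 mxE [RHS]mxE.
under eq_bigr => k _ do rewrite mxE EvecE HmxE mulr_sumr.
rewrite exchange_big /=.
under eq_bigr => c _ do rewrite Gsum.
rewrite (bigD1 a) //= eqxx /= big1 ?addr0; last first.
  by move=> c hc; rewrite eq_sym (negbTE hc).
by rewrite h; case: (l == b).
Qed.

Lemma WH i j : Wmx eI R i j *m Hmx eI R = Hmx eI R.
Proof.
rewrite /Wmx mulmxBl mul1mx -scalemxAl mulmx_suml big1 ?scaler0 ?subr0 //.
move=> l /andP[h1 h2].
rewrite -mulmxA.
have -> : (Evec eI R l i - Evec eI R l j)^T *m Hmx eI R = 0.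
  by rewrite linearB /= mulmxBl !EtH // subrr.
by rewrite mulmx0.
Qed.

Lemma HbH : Hbar eI R *m Hmx eI R = 1%:M.
Proof.
rewrite /Hbar -mulmxA mul_diag_mx; apply/matrixP => a b.
rewrite mxE HtH !mxE.
case: eqVneq => [->|]; rewrite ?mulr0 ?mulr1n ?mulr0n //.
by rewrite mulVf // pnatr_eq0.
Qed.
End Mx.

Local Open Scope ring_scope.
Lemma generic (R : realFieldType) (m n : nat) (W : 'M[R]_m) (H : 'M[R]_(m, n))
  (Hb : 'M[R]_(n, m)) (x : 'cV[R]_m) :
  W *m H = H -> Hb *m H = 1%:M ->
  (W - H *m Hb *m W) *m (H *m Hb *m x) = 0.
Proof.
move=> e1 e2.
rewrite mulmxBl -!mulmxA (mulmxA W H) e1.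
by rewrite (mulmxA Hb H) e2 mul1mx subrr.
Qed.

Theorem lemma4 (R : realFieldType) (N : nat) (eI em eC : rel 'I_N)
  (hN : (2 <= N)%N)
  (hI : simple_graph eI) (hconn : graph_connected eI)
  (hnc : graph_not_complete eI)
  (hm : maximal_triangle_free_subgraph em eI)
  (hC : simple_graph eC) (hmC : subgraph em eC) (hCI : subgraph eC eI)
  (i j : 'I_N) (hij : eC i j) :
  let W := Wmx eI R i j in
  let Q := W - Hmx eI R *m Hbar eI R *m W in
  forall x : 'cV[R]_(msum eI),
    Q *m (Hmx eI R *m Hbar eI R *m x) = 0.
Proof.
move=> W Q x; rewrite /Q /W; apply: generic; [exact: WH | exact: HbH].
Qed.
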